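(* Let $(X,\le)$ be a non-empty strictly inductive poset, let $f:X\to X$ and $a_0\in X$, let $(a_k)_k$ be the transfinite sequence of iterates of $f$ from $a_0$, and let $A=\{a_k\mid k \text{ an ordinal}\}$. Suppose $a_0\le f(a_0)$ and that for all $x,y\in A$, if $x\le f(x)\le y$ then $f(x)\le f(y)$. Then the sequence is monotone: $a_k\le a_l$ whenever $k<l$.
   Context: A poset is strictly inductive if every non-empty chain (totally ordered subset) has a least upper bound $\mathrm{lub}$ in $X$. The transfinite iterates are defined by $a_0$ given, $a_{k+1}=f(a_k)$, and $a_l=\mathrm{lub}\{a_k\mid k<l\}$ for limit ordinals $l$. *)

(* Defs.v *)
Definition partial_order {X : Type} (le : X -> X -> Prop) : Prop :=
  (forall x, le x x) /\
  (forall x y, le x y -> le y x -> x = y) /\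
  (forall x y z, le x y -> le y z -> le x z).

Definition is_chain {X : Type} (le : X -> X -> Prop) (C : X -> Prop) : Prop :=
  forall x y, C x -> C y -> le x y \/ le y x.

Definition is_upper_bound {X : Type} (le : X -> X -> Prop) (C : X -> Prop) (u : X) : Prop :=
  forall x, C x -> le x u.

Definition is_lub {X : Type} (le : X -> X -> Prop) (C : X -> Prop) (u : X) : Prop :=
  is_upper_bound le C u /\ (forall v, is_upper_bound le C v -> le u v).

Definition strictly_inductive {X : Type} (le : X -> X -> Prop) : Prop :=
  forall C : X -> Prop, (exists x, C x) -> is_chain le C -> exists u, is_lub le C u.

Definition well_order {I : Type} (lt : I -> I -> Prop) : Prop :=
  (forall i, ~ lt i i) /\
  (forall i j k, lt i j -> lt j k -> lt i k) /\
  (forall i j, lt i j \/ i = j \/ lt j i) /\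
  well_founded lt.

Definition is_zero {I : Type} (lt : I -> I -> Prop) (i : I) : Prop :=
  forall j, ~ lt j i.

Definition is_succ_of {I : Type} (lt : I -> I -> Prop) (i j : I) : Prop :=
  lt i j /\ (forall m, ~ (lt i m /\ lt m j)).

Definition is_limit {I : Type} (lt : I -> I -> Prop) (l : I) : Prop :=
  ~ is_zero lt l /\ (forall i, ~ is_succ_of lt i l).

Definition transfinite_iterates {X I : Type} (le : X -> X -> Prop)
    (lt : I -> I -> Prop) (f : X -> X) (a0 : X) (a : I -> X) : Prop :=
  (forall i, is_zero lt i -> a i = a0) /\
  (forall i j, is_succ_of lt i j -> a j = f (a i)) /\
  (forall l, is_limit lt l -> is_lub le (fun x => exists k, lt k l /\ x = a k) (a l)).

(* Main.v *)
Require Import Defs.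
From Stdlib Require Import Classical.

Theorem mainTheorem2 (X : Type) (le : X -> X -> Prop) (I : Type)
    (lt : I -> I -> Prop) (f : X -> X) (a0 : X) (a : I -> X) :
  partial_order le ->
  inhabited X ->
  strictly_inductive le ->
  well_order lt ->
  transfinite_iterates le lt f a0 a ->
  le a0 (f a0) ->
  (forall x y, (exists k, x = a k) -> (exists k, y = a k) ->
     le x (f x) -> le (f x) y -> le (f x) (f y)) ->
  forall k l, lt k l -> le (a k) (a l).
Proof.
  intros [Hrefl [Hanti Htr]] _ _ [Hirr [Hltr [Htot Hwf]]] [Hz [Hs Hl]] H0 Hmon.
  assert (Hsucc : forall k m, lt k m -> exists s, is_succ_of lt k s /\ (s = m \/ lt s m)).
  { intros k m; induction m as [m IH] using (well_founded_induction Hwf).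
    intro Hkm.
    destruct (classic (exists m', lt k m' /\ lt m' m)) as [[m' [H1 H2]]|Hn].
    - destruct (IH m' H2 H1) as [s [Hs1 [<-|Hs2]]].
      + exists s; split; auto.
      + exists s; split; eauto.
    - exists m; split; [|auto]. split; [exact Hkm|]. intros m0 [Ha Hb]; apply Hn; eauto. }
  assert (Q : forall l, le (a l) (f (a l)) /\ forall k, lt k l -> le (a k) (a l)).
  { intro l; induction l as [l IH] using (well_founded_induction Hwf).
    destruct (classic (is_zero lt l)) as [Hzl|Hnz].
    - rewrite (Hz l Hzl). split; auto. intros k Hk; exfalso; exact (Hzl k Hk).
    - destruct (classic (exists i, is_succ_of lt i l)) as [[i Hi]|Hns].
      + destruct (IH i (proj1 Hi)) as [Hi1 Hi2].
        rewrite (Hs i l Hi). split.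
        * apply Hmon; [eauto| exists l; symmetry; apply (Hs i l Hi) | exact Hi1 | apply Hrefl].
        * intros k Hk. destruct (Htot k i) as [Hki|[->|Hik]].
          -- eapply Htr; [apply Hi2; auto|auto].
          -- auto.
          -- exfalso; exact (proj2 Hi k (conj Hik Hk)).
      + assert (Hlim : is_limit lt l).
        { split; auto. intros i Hi; apply Hns; eauto. }
        destruct (Hl l Hlim) as [Hub Hleast].
        split.
        * apply Hleast. intros x [k [Hk ->]].
          destruct (Hsucc k l Hk) as [s [Hsk [Hsl|Hsl]]].
          -- subst s. exfalso; apply Hns; eauto.
          -- destruct (IH k Hk) as [Hk1 _].
             assert (Hfs : le (f (a k)) (a l)).
             { rewrite <- (Hs k s Hsk). apply Hub. eauto. }
             eapply Htr; [exact Hk1|]. apply Hmon; eauto.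
        * intros k Hk. apply Hub. eauto. }
  intros k l Hkl. apply (proj2 (Q l)); auto.
Qed.
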